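(* Let $f$ be a transcendental meromorphic function projectable via $\exp_1$, and $\ell\in\mathbb{Z}$ with $f(z+1)=f(z)+\ell$. Suppose $z^*$ is a pseudoperiodic point of $f$ of minimal type $(p,\sigma)$, $p\ge1$, $\sigma\in\mathbb{Z}$, and let $z^*_k=z^*+k$, $k\in\mathbb{Z}$. Then: (i) If $|\ell|\ge2$, the points $z^*_k$ are pseudoperiodic of minimal type $(p,\sigma+(\ell^p-1)k)$, and for all $m\in\mathbb{N}$, $f^{mp}(z^*_k)=z^*_k+(\ell^{mp}-1)(k-\delta)$ where $\delta=\frac{\sigma}{1-\ell^p}$. In particular $f^{mp}(z^*_k)\to\infty$ as $m\to\infty$, except for $z^*_\delta$ when $\delta\in\mathbb{Z}$ (which is $p$-periodic). (ii) If $\ell=1$, or $\ell=-1$ with $p$ even, the points $z^*_k$ are pseudoperiodic of minimal type $(p,\sigma)$ and $f^{mp}(z^*_k)=z^*_k+m\sigma$ for all $m\in\mathbb{N}$. In particular $f^{mp}(z^*_k)\to\infty$ as $m\to\infty$ unless $\sigma=0$ (in which case each $z^*_k$ is $p$-periodic). (iii) If $\ell=-1$ with $p$ odd, the points $z^*_k$ are pseudoperiodic of minimal type $(p,\sigma-2k)$; in particular each $z^*_k$ is $2p$-periodic, except $z^*_{\sigma/2}$ when $\sigma/2\in\mathbb{Z}$ (which is $p$-periodic). (iv) If $\ell=0$, the point $z^*_\sigma$ is $p$-periodic and $f(z^*_k)=z^*_\sigma$ for all $k\in\mathbb{Z}$.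
   Context: $\exp_1(z)=e^{2\pi iz}$; $f$ is projectable via $\exp_1$ if there is $g$ with $g\circ\exp_1=\exp_1\circ f$ wherever defined. A point $z^*\in\mathbb{C}\setminus f^{-1}(\infty)$ is pseudoperiodic of type $(p,\sigma)$ if $f^p(z^* )=z^*+\sigma$ ($p\ge1$, $\sigma\in\mathbb{Z}$); of minimal type if $p$ is the smallest such natural number. ''$p$-periodic'' means of minimal period $p$. *)

(* Defs.v *)
From Stdlib Require Import Reals ZArith List.
From Coquelicot Require Import Coquelicot.
Open Scope C_scope.

Definition Cz (k : Z) : C := RtoC (IZR k).

(* exp_1(z) = e^{2 pi i z}, written out via real exp/cos/sin *)
Definition exp1 (z : C) : C :=
  (exp (- (2 * PI * Im z)) * cos (2 * PI * Re z),
   exp (- (2 * PI * Im z)) * sin (2 * PI * Re z))%R.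

(* A function C -> C u {oo}; [None] stands for the value oo (a pole). *)

Definition holo_at (f : C -> option C) (z0 : C) : Prop :=
  exists (r : posreal) (g : C -> C),
    (forall z, (Cmod (z - z0) < r)%R -> f z = Some (g z)) /\
    @ex_derive C_AbsRing C_NormedModule g z0.

Definition pole_at (f : C -> option C) (z0 : C) : Prop :=
  f z0 = None /\
  (exists r : posreal, forall z, z <> z0 -> (Cmod (z - z0) < r)%R -> f z <> None) /\
  (forall M : R, exists d : posreal, forall z w,
      z <> z0 -> (Cmod (z - z0) < d)%R -> f z = Some w -> (M < Cmod w)%R).

Definition meromorphic (f : C -> option C) : Prop :=
  forall z0, holo_at f z0 \/ pole_at f z0.

(* polynomial evaluation, coefficients in increasing degree *)
Definition peval (l : list C) (z : C) : C :=
  fold_right (fun a acc => a + z * acc) 0 l.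

Definition is_rational (f : C -> option C) : Prop :=
  exists P Q : list C, (exists c, In c Q /\ c <> 0) /\
    forall z, peval Q z <> 0 -> f z = Some (peval P z / peval Q z).

Definition transcendental_meromorphic (f : C -> option C) : Prop :=
  meromorphic f /\ ~ is_rational f.

Definition projectable_exp1 (f : C -> option C) : Prop :=
  exists g : C -> C, forall z w, f z = Some w -> g (exp1 z) = exp1 w.

Fixpoint fiter (f : C -> option C) (n : nat) (z : C) : option C :=
  match n with
  | O => Some z
  | S n' => match fiter f n' z with Some w => f w | None => None end
  end.

Definition pseudoperiodic (f : C -> option C) (z : C) (p : nat) (s : Z) : Prop :=
  f z <> None /\ (1 <= p)%nat /\ fiter f p z = Some (z + Cz s).

Definition minimal_pseudoperiodic (f : C -> option C) (z : C) (p : nat) (s : Z) : Prop :=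
  pseudoperiodic f z p s /\
  forall (q : nat) (s' : Z), (1 <= q < p)%nat -> ~ pseudoperiodic f z q s'.

Definition periodic_point (f : C -> option C) (z : C) (p : nat) : Prop :=
  (1 <= p)%nat /\ fiter f p z = Some z /\
  forall q : nat, (1 <= q < p)%nat -> fiter f q z <> Some z.

Definition tends_to_inf (u : nat -> option C) : Prop :=
  forall M : R, exists N : nat, forall m : nat, (N <= m)%nat ->
    exists w, u m = Some w /\ (M < Cmod w)%R.

(* Main.v *)
Require Import Defs.
From Stdlib Require Import Reals ZArith List Lia Lra.
From Coquelicot Require Import Coquelicot.
Open Scope C_scope.

Lemma Cz_add a b : Cz (a + b) = Cz a + Cz b.
Proof. unfold Cz; rewrite plus_IZR; apply RtoC_plus. Qed.
Lemma Cz_mul a b : Cz (a * b) = Cz a * Cz b.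
Proof. unfold Cz; rewrite mult_IZR; apply RtoC_mult. Qed.
Lemma Cz_sub a b : Cz (a - b) = Cz a - Cz b.
Proof. unfold Cz; rewrite minus_IZR; apply RtoC_minus. Qed.
Lemma Cz_0 : Cz 0 = 0. Proof. reflexivity. Qed.
Lemma Cz_1 : Cz 1 = 1. Proof. reflexivity. Qed.
Lemma Cz_inj a b : Cz a = Cz b -> a = b.
Proof. unfold Cz, RtoC; intro H. apply (f_equal fst) in H; simpl in H. now apply eq_IZR. Qed.

Lemma Cz_opp a : Cz (- a) = - Cz a.
Proof. unfold Cz; rewrite opp_IZR; apply RtoC_opp. Qed.

Ltac czs := repeat progress (rewrite ?Cz_add, ?Cz_sub, ?Cz_mul, ?Cz_opp, ?Cz_1, ?Cz_0).
Ltac czs2 := repeat progress (rewrite ?Cz_add, ?Cz_sub, ?Cz_mul, ?Cz_opp).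

Lemma L1 (f : C -> option C) (l : Z)
  (Hf : forall z, f (z + 1) = option_map (fun w => w + Cz l) (f z)) :
  forall j z, f (z + Cz j) = option_map (fun w => w + Cz (l * j)) (f z).
Proof.
  intro j; induction j using Z.peano_ind; intro z.
  - rewrite Cz_0, Z.mul_0_r, Cz_0. replace (z + 0) with z by ring.
    destruct (f z); cbn [option_map]; auto. f_equal; ring.
  - replace (z + Cz (Z.succ j)) with ((z + Cz j) + 1)
      by (rewrite <- Z.add_1_r, Cz_add, Cz_1; ring).
    rewrite Hf, IHj. destruct (f z); cbn [option_map]; auto. f_equal.
    rewrite Z.mul_succ_r, Cz_add. ring.
  - specialize (IHj z).
    replace (z + Cz j) with ((z + Cz (Z.pred j)) + 1) in IHj
      by (rewrite <- (Z.succ_pred j) at 2; rewrite <- Z.add_1_r, Cz_add, Cz_1; ring).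
    rewrite Hf in IHj.
    destruct (f (z + Cz (Z.pred j))) eqn:E1; destruct (f z) eqn:E2; cbn [option_map] in *;
      try discriminate; auto.
    assert (IHj' : c + Cz l = c0 + Cz (l * j)) by congruence. f_equal.
    replace c with ((c + Cz l) - Cz l) by ring. rewrite IHj'.
    rewrite Z.mul_pred_r, Cz_sub. ring.
Qed.

Lemma L2 (f : C -> option C) (l : Z)
  (Hf : forall z, f (z + 1) = option_map (fun w => w + Cz l) (f z)) :
  forall n j z, fiter f n (z + Cz j) =
     option_map (fun w => w + Cz (l ^ Z.of_nat n * j)) (fiter f n z).
Proof.
  induction n; intros j z.
  - cbn [fiter option_map]. change (Z.of_nat 0) with 0%Z. rewrite Z.pow_0_r, Z.mul_1_l. reflexivity.
  - cbn [fiter]. rewrite IHn. destruct (fiter f n z); cbn [option_map]; auto.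
    rewrite (L1 f l Hf). destruct (f c); cbn [option_map]; auto. f_equal. f_equal. f_equal.
    rewrite Nat2Z.inj_succ, Z.pow_succ_r by lia. ring.
Qed.

Lemma L3 (f : C -> option C) n m z :
  fiter f (n + m) z = match fiter f n z with Some w => fiter f m w | None => None end.
Proof.
  induction m.
  - rewrite Nat.add_0_r. destruct (fiter f n z); auto.
  - rewrite Nat.add_succ_r. simpl. rewrite IHm. destruct (fiter f n z); auto.
Qed.

Lemma nomin (f : C -> option C) (l : Z)
  (Hf : forall z, f (z + 1) = option_map (fun w => w + Cz l) (f z)) zs p s :
  minimal_pseudoperiodic f zs p s ->
  forall q j j', (1 <= q < p)%nat -> fiter f q (zs + Cz j) = Some (zs + Cz j') -> False.
Proof.
  intros Hm q j j' Hq H. rewrite (L2 f l Hf) in H.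
  destruct (fiter f q zs) eqn:E; simpl in H; [|discriminate].
  assert (H' : c + Cz (l ^ Z.of_nat q * j) = zs + Cz j') by congruence.
  apply (proj2 Hm q (j' - l ^ Z.of_nat q * j)%Z Hq).
  split; [exact (proj1 (proj1 Hm)) | split; [lia | rewrite E; f_equal]].
  replace c with ((c + Cz (l ^ Z.of_nat q * j)) - Cz (l ^ Z.of_nat q * j)) by ring.
  rewrite H', Cz_sub. ring.
Qed.

Lemma minimal_shift (f : C -> option C) (l : Z)
  (Hf : forall z, f (z + 1) = option_map (fun w => w + Cz l) (f z)) zs p s k s' :
  minimal_pseudoperiodic f zs p s ->
  fiter f p (zs + Cz k) = Some (zs + Cz k + Cz s') ->
  minimal_pseudoperiodic f (zs + Cz k) p s'.
Proof.
  intros Hm H. pose proof Hm as [[H0 [H1 H2]] H3].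
  split; [split; [|split; auto]|].
  - rewrite (L1 f l Hf). destruct (f zs); simpl; congruence.
  - intros q s'' Hq [_ [_ Hq']].
    apply (nomin f l Hf zs p s Hm q k (k + s'')%Z Hq).
    rewrite Hq', Cz_add. f_equal. ring.
Qed.

Lemma periodic_shift (f : C -> option C) (l : Z)
  (Hf : forall z, f (z + 1) = option_map (fun w => w + Cz l) (f z)) zs p s k :
  minimal_pseudoperiodic f zs p s ->
  fiter f p (zs + Cz k) = Some (zs + Cz k) ->
  periodic_point f (zs + Cz k) p.
Proof.
  intros Hm H. split; [exact (proj1 (proj2 (proj1 Hm))) | split; auto].
  intros q Hq E. exact (nomin f l Hf zs p s Hm q k k Hq E).
Qed.

Lemma tends_int zs (u : nat -> option C) (a : nat -> Z) :
  (forall m, u m = Some (zs + Cz (a m))) ->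
  (forall K : Z, exists N, forall m, (N <= m)%nat -> (K <= Z.abs (a m))%Z) ->
  tends_to_inf u.
Proof.
  intros Hu Ha M. destruct (Ha (up (M + Cmod zs))) as [N HN]. exists N.
  intros m Hm. exists (zs + Cz (a m)); split; auto.
  specialize (HN m Hm). destruct (archimed (M + Cmod zs)) as [Ha1 _].
  apply IZR_le in HN. rewrite abs_IZR in HN.
  assert (Cmod (Cz (a m)) <= Cmod (zs + Cz (a m)) + Cmod zs)%R.
  { replace (Cz (a m)) with ((zs + Cz (a m)) + - zs) at 1 by ring.
    rewrite <- (Cmod_opp zs). apply Cmod_triangle. }
  unfold Cz in *; rewrite Cmod_R in H. lra.
Qed.

Lemma pow_grow L : (2 <= Z.abs L)%Z -> forall m : nat,
  (Z.of_nat m + 1 <= Z.abs (L ^ Z.of_nat m))%Z.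
Proof.
  intros HL m; induction m.
  - simpl. lia.
  - rewrite Nat2Z.inj_succ, Z.pow_succ_r by lia. rewrite Z.abs_mul. nia.
Qed.

Fixpoint gs (s L : Z) (m : nat) : Z :=
  match m with O => 0%Z | S m' => (s + L * gs s L m')%Z end.

Lemma gs_eq s L m : (gs s L m * (L - 1) = s * (L ^ Z.of_nat m - 1))%Z.
Proof.
  induction m; simpl gs.
  - simpl. ring.
  - rewrite Nat2Z.inj_succ, Z.pow_succ_r by lia.
    replace ((s + L * gs s L m) * (L - 1))%Z with (s * (L-1) + L * (gs s L m * (L - 1)))%Z by ring.
    rewrite IHm. ring.
Qed.

Lemma gs_one s m : gs s 1 m = (Z.of_nat m * s)%Z.
Proof. induction m; cbn [gs]; [reflexivity|]. rewrite IHm, Nat2Z.inj_succ. ring. Qed.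

Lemma G (f : C -> option C) (l : Z)
  (Hf : forall z, f (z + 1) = option_map (fun w => w + Cz l) (f z)) zs p s :
  fiter f p zs = Some (zs + Cz s) ->
  forall m, fiter f (m * p) zs = Some (zs + Cz (gs s (l ^ Z.of_nat p) m)).
Proof.
  intros Hp m. induction m.
  - cbn [fiter gs Nat.mul]. rewrite Cz_0. f_equal. ring.
  - rewrite Nat.mul_succ_l, L3, IHm, (L2 f l Hf), Hp. cbn [option_map gs].
    f_equal. rewrite Cz_add, Cz_mul. ring.
Qed.

Lemma Fm (f : C -> option C) (l : Z)
  (Hf : forall z, f (z + 1) = option_map (fun w => w + Cz l) (f z)) zs p s :
  fiter f p zs = Some (zs + Cz s) ->
  forall m k, fiter f (m * p) (zs + Cz k) =
    Some (zs + Cz (gs s (l ^ Z.of_nat p) m) + Cz ((l ^ Z.of_nat p) ^ Z.of_nat m * k)).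
Proof.
  intros Hp m k. rewrite (L2 f l Hf), (G f l Hf zs p s Hp m). cbn [option_map].
  rewrite Nat2Z.inj_mul, (Z.mul_comm (Z.of_nat m) (Z.of_nat p)), Z.pow_mul_r by lia. reflexivity.
Qed.

Theorem proposition4p4 (f : C -> option C) (l : Z) (zs : C) (p : nat) (s : Z) :
  transcendental_meromorphic f ->
  projectable_exp1 f ->
  (forall z, f (z + 1) = option_map (fun w => w + Cz l) (f z)) ->
  minimal_pseudoperiodic f zs p s ->
  (* (i) *)
  ((2 <= Z.abs l)%Z ->
     let delta := Cz s / (1 - Cz (l ^ Z.of_nat p)) in
     (forall k : Z,
        minimal_pseudoperiodic f (zs + Cz k) p (s + (l ^ Z.of_nat p - 1) * k)%Z) /\
     (forall (k : Z) (m : nat),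
        fiter f (m * p) (zs + Cz k)
        = Some (zs + Cz k + (Cz (l ^ Z.of_nat (m * p)) - 1) * (Cz k - delta))) /\
     (forall k : Z, Cz k <> delta ->
        tends_to_inf (fun m => fiter f (m * p) (zs + Cz k))) /\
     (forall k : Z, Cz k = delta -> periodic_point f (zs + Cz k) p)) /\
  (* (ii) *)
  ((l = 1%Z \/ (l = (-1)%Z /\ Nat.even p = true)) ->
     (forall k : Z, minimal_pseudoperiodic f (zs + Cz k) p s) /\
     (forall (k : Z) (m : nat),
        fiter f (m * p) (zs + Cz k) = Some (zs + Cz k + Cz (Z.of_nat m * s))) /\
     (s <> 0%Z -> forall k : Z,
        tends_to_inf (fun m => fiter f (m * p) (zs + Cz k))) /\
     (s = 0%Z -> forall k : Z, periodic_point f (zs + Cz k) p)) /\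
  (* (iii) *)
  ((l = (-1)%Z /\ Nat.odd p = true) ->
     (forall k : Z, minimal_pseudoperiodic f (zs + Cz k) p (s - 2 * k)%Z) /\
     (forall k : Z, s <> (2 * k)%Z -> periodic_point f (zs + Cz k) (2 * p)) /\
     (forall k : Z, s = (2 * k)%Z -> periodic_point f (zs + Cz k) p)) /\
  (* (iv) *)
  (l = 0%Z ->
     periodic_point f (zs + Cz s) p /\
     forall k : Z, fiter f p (zs + Cz k) = Some (zs + Cz s)).

Proof.
  intros _ _ Hf Hm.
  pose proof (proj2 (proj2 (proj1 Hm))) as Hp.
  pose proof (proj1 (proj2 (proj1 Hm))) as Hp1.
  assert (base : forall k, fiter f p (zs + Cz k) = Some (zs + Cz s + Cz (l ^ Z.of_nat p * k)))
    by (intro k; rewrite (L2 f l Hf), Hp; reflexivity).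
  split; [|split; [|split]].
  -
    intros Hl. cbv zeta.
    assert (HL2 : (2 <= Z.abs (l ^ Z.of_nat p))%Z) by (pose proof (pow_grow l Hl p); lia).
    assert (HL1 : Cz (l ^ Z.of_nat p) - 1 <> 0).
    { intro E. assert (H : Cz (l ^ Z.of_nat p) = Cz 1).
      { rewrite Cz_1. replace (Cz (l ^ Z.of_nat p)) with ((Cz (l ^ Z.of_nat p) - 1) + 1) by ring.
        rewrite E. ring. }
      apply Cz_inj in H. rewrite H in HL2. simpl in HL2. lia. }
    assert (HL1' : 1 - Cz (l ^ Z.of_nat p) <> 0).
    { intro E. apply HL1. replace (Cz (l ^ Z.of_nat p) - 1) with (- (1 - Cz (l ^ Z.of_nat p))) by ring.
      rewrite E. ring. }
    split; [|split; [|split]].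
    + intro k. apply (minimal_shift f l Hf zs p s k _ Hm). rewrite base. apply f_equal. czs. ring.
    + intros k m. rewrite (Fm f l Hf zs p s Hp m k).
      rewrite Nat2Z.inj_mul, (Z.mul_comm (Z.of_nat m) (Z.of_nat p)), Z.pow_mul_r by lia.
      pose proof (gs_eq s (l ^ Z.of_nat p) m) as E. apply (f_equal Cz) in E.
      rewrite !Cz_mul, !Cz_sub, Cz_1 in E.
      assert (Eg : Cz (gs s (l ^ Z.of_nat p) m) =
                   Cz s * (Cz ((l ^ Z.of_nat p) ^ Z.of_nat m) - 1) / (Cz (l ^ Z.of_nat p) - 1))
        by (rewrite <- E; field; exact HL1).
      apply f_equal. rewrite Eg, Cz_mul. field. split; assumption.
    + intros k Hk.
      assert (Hc : (k * (l ^ Z.of_nat p - 1) + s <> 0)%Z).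
      { intro E. apply Hk.
        assert (Es : Cz s = Cz k * (1 - Cz (l ^ Z.of_nat p))).
        { replace s with (k * (1 - l ^ Z.of_nat p))%Z.
          - czs. reflexivity.
          - rewrite Z.mul_sub_distr_l, Z.mul_1_r. rewrite Z.mul_sub_distr_l, Z.mul_1_r in E. lia. }
        rewrite Es. field. exact HL1'. }
      apply (tends_int zs _ (fun m => gs s (l ^ Z.of_nat p) m + (l ^ Z.of_nat p) ^ Z.of_nat m * k)%Z).
      * intro m. rewrite (Fm f l Hf zs p s Hp). apply f_equal. rewrite Cz_add. ring.
      * intro K. exists (Z.to_nat (Z.abs K * (Z.abs (l ^ Z.of_nat p) + 1) + Z.abs s)).
        intros m Hmn.
        pose proof (gs_eq s (l ^ Z.of_nat p) m) as E.
        pose proof (pow_grow (l ^ Z.of_nat p) HL2 m) as Hg.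
        remember (l ^ Z.of_nat p)%Z as L. remember (L ^ Z.of_nat m)%Z as Lm.
        remember (gs s L m) as g.
        assert (EX : ((g + Lm * k) * (L - 1) = Lm * (k * (L - 1) + s) - s)%Z)
          by (rewrite Z.mul_add_distr_r, E; ring).
        assert (A1 : (Z.abs (g + Lm * k) * Z.abs (L - 1) = Z.abs (Lm * (k * (L - 1) + s) - s))%Z)
          by (rewrite <- Z.abs_mul, EX; reflexivity).
        assert (A2 : Z.abs (Lm * (k * (L - 1) + s)) = (Z.abs Lm * Z.abs (k * (L - 1) + s))%Z)
          by apply Z.abs_mul.
        assert (A3 : (Z.abs (k * (L - 1) + s) >= 1)%Z) by lia.
        assert (A4 : (Z.abs (L - 1) <= Z.abs L + 1)%Z) by lia.
        assert (A5 : (Z.abs Lm * 1 <= Z.abs Lm * Z.abs (k * (L - 1) + s))%Z)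
          by (apply Z.mul_le_mono_nonneg_l; lia).
        assert (A6 : (Z.abs (Lm * (k * (L - 1) + s) - s) >= Z.abs (Lm * (k * (L - 1) + s)) - Z.abs s)%Z) by lia.
        assert (Hm' : (Z.of_nat m >= Z.abs K * (Z.abs L + 1) + Z.abs s)%Z) by lia.
        clear HeqLm Heqg EX E.
        set (a := Z.abs (g + Lm * k)) in *. set (b := Z.abs (L - 1)) in *.
        assert (B1 : (a * b >= Z.abs K * (Z.abs L + 1) + 1)%Z) by lia.
        assert (B2 : (0 <= a)%Z) by (unfold a; lia).
        assert (B3 : (0 <= b)%Z) by (unfold b; lia).
        assert (B4 : (Z.abs K * b <= Z.abs K * (Z.abs L + 1))%Z) by (apply Z.mul_le_mono_nonneg_l; lia).
        destruct (Z_le_gt_dec (Z.abs K) a) as [H|H]; [lia|].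
        assert (a * b <= Z.abs K * b)%Z by (apply Z.mul_le_mono_nonneg_r; lia). lia.
    + intros k Hk. apply (periodic_shift f l Hf zs p s k Hm). rewrite base. apply f_equal.
      assert (Es : Cz s = Cz k * (1 - Cz (l ^ Z.of_nat p))) by (rewrite Hk; field; exact HL1').
      rewrite Cz_mul, Es. ring.
  -
    intros Hl1.
    assert (HL : (l ^ Z.of_nat p = 1)%Z).
    { destruct Hl1 as [-> | [-> He]].
      - apply Z.pow_1_l; lia.
      - apply Nat.even_spec in He. destruct He as [q ->].
        rewrite Nat2Z.inj_mul, Z.pow_mul_r by lia.
        replace ((-1) ^ Z.of_nat 2)%Z with 1%Z by reflexivity. apply Z.pow_1_l; lia. }
    split; [|split; [|split]].
    + intro k. apply (minimal_shift f l Hf zs p s k _ Hm). rewrite base, HL, Z.mul_1_l.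
      apply f_equal. ring.
    + intros k m. rewrite (Fm f l Hf zs p s Hp), HL, Z.pow_1_l, gs_one by lia.
      apply f_equal. rewrite Z.mul_1_l. ring.
    + intros Hs k. apply (tends_int zs _ (fun m => k + Z.of_nat m * s)%Z).
      * intro m. rewrite (Fm f l Hf zs p s Hp), HL, Z.pow_1_l, gs_one by lia.
        apply f_equal. rewrite Z.mul_1_l. czs. ring.
      * intro K. exists (Z.to_nat (Z.abs K + Z.abs k)). intros m Hmn.
        assert (Z.abs (Z.of_nat m * s) = (Z.of_nat m * Z.abs s)%Z) by (rewrite Z.abs_mul; lia).
        assert (Z.of_nat m * 1 <= Z.of_nat m * Z.abs s)%Z by (apply Z.mul_le_mono_nonneg_l; lia).
        lia.
    + intros Hs k. subst s. apply (periodic_shift f l Hf zs p 0 k Hm).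
      rewrite base, HL, Z.mul_1_l, Cz_0. apply f_equal. ring.
  -
    intros [Hl Ho].
    assert (HL : (l ^ Z.of_nat p = -1)%Z).
    { subst l. apply Nat.odd_spec in Ho. destruct Ho as [q ->].
      rewrite Nat2Z.inj_add, Z.pow_add_r by lia.
      rewrite Nat2Z.inj_mul, Z.pow_mul_r by lia.
      replace ((-1) ^ Z.of_nat 2)%Z with 1%Z by reflexivity.
      replace ((-1) ^ Z.of_nat 1)%Z with (-1)%Z by reflexivity.
      rewrite Z.pow_1_l; lia. }
    assert (base' : forall k, fiter f p (zs + Cz k) = Some (zs + Cz (s - k))).
    { intro k. rewrite base, HL. apply f_equal. replace (-1 * k)%Z with (- k)%Z by ring. czs. ring. }
    split; [|split].
    + intro k. apply (minimal_shift f l Hf zs p s k _ Hm). rewrite base'. apply f_equal. replace (s - 2 * k)%Z with (s - (k + k))%Z by ring. czs. ring.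
    + intros k Hsk. split; [lia|split].
      * replace (2 * p)%nat with (p + p)%nat by lia. rewrite L3, base', base'.
        apply f_equal. czs. ring.
      * intros q Hq E. destruct (Nat.lt_trichotomy q p) as [Hlt|[Heq|Hgt]].
        -- apply (nomin f l Hf zs p s Hm q k k); [lia|exact E].
        -- subst q. rewrite base' in E.
           assert (E' : zs + Cz (s - k) = zs + Cz k) by congruence.
           assert (H : Cz (s - k) = Cz k).
           { transitivity (zs + Cz (s - k) - zs); [ring|]. rewrite E'. ring. }
           apply Cz_inj in H. lia.
        -- replace q with (p + (q - p))%nat in E by lia. rewrite L3, base' in E.
           apply (nomin f l Hf zs p s Hm (q - p) (s - k) k); [lia|exact E].
    + intros k Hsk. apply (periodic_shift f l Hf zs p s k Hm). rewrite base'.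
      replace (s - k)%Z with k by lia. reflexivity.
  -
    intros Hl0. subst l.
    assert (base0 : forall k, fiter f p (zs + Cz k) = Some (zs + Cz s)).
    { intro k. rewrite base, Z.pow_0_l by lia. rewrite Z.mul_0_l, Cz_0. apply f_equal. ring. }
    split.
    + apply (periodic_shift f 0 Hf zs p s s Hm). rewrite base0. reflexivity.
    + exact base0.
Qed.
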